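(* Every equal-neighbor matrix $P\in\mathbb{R}^{n\times n}$ satisfies, for all $k\in\mathbb{N}$, $$\Big\|\tfrac1nP^k\Big\|_1\le 2\,\Big\|\tfrac1nP\Big\|_1^{1/2}.$$
   Context: An $n\times n$ matrix $P$ is equal-neighbor if $P=\mathrm{diag}(W\mathbf{1}_n)^{-1}W$ for some symmetric matrix $W\in\{0,1\}^{n\times n}$ with at least one nonzero entry in each row (diagonal entries allowed). For a nonnegative matrix $A$, $\|A\|_1=\max_j\sum_iA_{ij}$ (maximum column sum). *)

(* Defs.v *)
From HB Require Import structures.
From mathcomp Require Import all_boot all_order all_algebra.
From mathcomp Require Import reals.
Set Implicit Arguments. Unset Strict Implicit. Unset Printing Implicit Defensive.
Import Order.TTheory GRing.Theory Num.Theory.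
Local Open Scope ring_scope.

Definition mxpow (R : realType) (n : nat) (A : 'M[R]_n) (k : nat) : 'M[R]_n :=
  iter k (mulmx A) 1%:M.

(* ||A||_1 = maximum column sum (the paper applies it to nonnegative matrices). *)
Definition norm1 (R : realType) (n : nat) (A : 'M[R]_n) : R :=
  \big[Num.max/0]_(j < n) \sum_(i < n) A i j.

Definition equal_neighbor (R : realType) (n : nat) (P : 'M[R]_n) : Prop :=
  exists W : 'M[R]_n,
    [/\ forall i j, W i j = 0 \/ W i j = 1,
        W^T = W,
        forall i, exists j, W i j != 0
      & P = invmx (diag_mx (\row_i (\sum_j W i j))) *m W].

(* Main.v *)
Require Import Defs.
From HB Require Import structures.
From mathcomp Require Import all_boot all_order all_algebra.
From mathcomp Require Import reals.
From mathcomp Require Import ring lra.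
Import Order.TTheory GRing.Theory Num.Theory.
Local Open Scope ring_scope.

Lemma jensen (R : realType) (I : finType) (p x : I -> R) :
  (forall i, 0 <= p i) -> \sum_i p i = 1 ->
  (\sum_i p i * x i) ^+ 2 <= \sum_i p i * x i ^+ 2.
Proof.
move=> p0 p1; set m := \sum_i p i * x i.
have : 0 <= \sum_i p i * (x i - m) ^+ 2.
  by apply: sumr_ge0 => i _; rewrite mulr_ge0 // sqr_ge0.
have -> : \sum_i p i * (x i - m) ^+ 2 =
   \sum_i (p i * x i ^+ 2 - (2 * m) * (p i * x i) + m ^+ 2 * p i).
  by apply: eq_bigr => i _; ring.
rewrite big_split sumrB /= -!mulr_sumr p1 -/m; lra.
Qed.

Lemma cs_bound (R : realType) (n : nat) (d z : 'I_n -> R) :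
  (0 < n)%N -> (forall i, 1 <= d i) ->
  (\sum_i z i) ^+ 2 <= n%:R * \sum_i d i * z i ^+ 2.
Proof.
move=> n0 d1; set N : R := n%:R; set a := N^-1.
have N0 : N != 0 by rewrite /N pnatr_eq0 -lt0n.
have a0 : 0 <= a by rewrite /a invr_ge0 ler0n.
have aN : N * a = 1 by rewrite /a mulfV.
have J := @jensen R _ (fun _ => a) z (fun _ => a0).
rewrite -!mulr_sumr exprMn sumr_const card_ord -mulr_natr mulrC aN in J.
have {}J := J erefl.
have H : N ^+ 2 * (a ^+ 2 * (\sum_i z i) ^+ 2) <= N ^+ 2 * (a * \sum_i z i ^+ 2).
  by rewrite ler_wpM2l // sqr_ge0.
rewrite mulrA -exprMn aN expr1n mul1r expr2 -mulrA (mulrA N a) aN mul1r in H.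
apply: le_trans H _; rewrite ler_wpM2l ?ler0n //.
apply: ler_sum => i _; apply: ler_peMl => //; exact: sqr_ge0.
Qed.

Theorem lemma7 (R : realType) (n : nat) (P : 'M[R]_n) (k : nat) :
  equal_neighbor P ->
  norm1 ((n%:R)^-1 *: mxpow P k) <= 2 * Num.sqrt (norm1 ((n%:R)^-1 *: P)).
Proof.
move=> [W [W01 Wsym Wnz ->]]; clear P.
set D := \row_i _; set P := invmx _ *m W.
pose d i := \sum_j W i j.
have W0 : forall i j, 0 <= W i j by move=> i j; case: (W01 i j) => ->.
have Wsq : forall i j, W i j ^+ 2 = W i j.
  by move=> i j; case: (W01 i j) => ->; rewrite ?expr0n ?expr1n.
have WT : forall i j, W i j = W j i by move=> i j; rewrite -{1}Wsym mxE.
have d1 : forall i, 1 <= d i.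
  move=> i; have [j Wij] := Wnz i.
  have Wij1 : W i j = 1 by case: (W01 i j) Wij => ->; rewrite ?eqxx.
  rewrite /d (bigD1 j) //= Wij1 lerDl; apply: sumr_ge0 => l _; exact: W0.
have dne : forall i, d i != 0 by move=> i; apply: lt0r_neq0; apply: lt_le_trans (d1 i).
have d0 : forall i, 0 <= d i by move=> i; apply: le_trans (d1 i).
have dn : forall i, d i <= n%:R.
  move=> i; rewrite /d -[n in n%:R]card_ord -sumr_const; apply: ler_sum => j _.
  by case: (W01 i j) => ->.
have PE : forall i j, P i j = W i j / d i.
  have U : diag_mx D \in unitmx.
    rewrite unitmxE det_diag unitfE; apply/prodf_neq0 => i _; rewrite mxE; exact: dne.
  have : diag_mx D *m P = W by rewrite /P mulKVmx.
  move=> h i j; have := congr1 (fun M : 'M[R]_n => M i j) h; rewrite mul_diag_mx !mxE => {}h.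
  by rewrite -h mulrC mulKf.
have P0 : forall i j, 0 <= P i j by move=> i j; rewrite PE divr_ge0.
have Prow : forall i, \sum_l P i l = 1.
  move=> i; under eq_bigr do rewrite PE.
  rewrite -mulr_suml; exact: divff (dne i).
have contr : forall v : 'I_n -> R,
    \sum_i d i * (\sum_l P i l * v l) ^+ 2 <= \sum_l d l * v l ^+ 2.
  move=> v; apply: (@le_trans _ _ (\sum_i d i * \sum_l P i l * v l ^+ 2)).
    apply: ler_sum => i _; apply: ler_wpM2l => //; exact: jensen.
  under eq_bigr do rewrite mulr_sumr.
  rewrite exchange_big /= le_eqVlt; apply/orP; left; apply/eqP.
  apply: eq_bigr => l _; rewrite [d l]/d mulr_suml; apply: eq_bigr => i _.
  by rewrite PE (WT i l) [W l i / d i]mulrC !mulrA mulfV ?mul1r.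
set x := norm1 ((n%:R)^-1 *: P).
rewrite /norm1; apply: bigmax_le; first by rewrite mulr_ge0 ?sqrtr_ge0.
move=> j _ /=.
have n0 : (0 < n)%N by apply: leq_ltn_trans (ltn_ord j).
set N : R := n%:R; set a := N^-1.
have N0 : N != 0 by rewrite /N pnatr_eq0 -lt0n.
have aN : N * a = 1 by rewrite /a mulfV.
have a0 : 0 <= a by rewrite /a invr_ge0 ler0n.
under eq_bigr do rewrite mxE; rewrite -mulr_sumr.
set S := \sum_i _.
set C := \sum_i P i j.
have hx : a * C <= x.
  rewrite /x /norm1; apply: le_trans (le_bigmax _ (fun j => \sum_i (a *: P) i j) j).
  by under [leRHS]eq_bigr do rewrite mxE; rewrite -mulr_sumr.
have colS : forall m i, mxpow P m.+1 i j = \sum_l P i l * mxpow P m l j.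
  by move=> m i; rewrite /mxpow iterS mxE.
have Dn : forall m, \sum_i d i * mxpow P m.+1 i j ^+ 2 <= C.
  have -> : C = \sum_i d i * mxpow P 1 i j ^+ 2.
    apply: eq_bigr => i _; rewrite /mxpow /= mulmx1 PE -[in LHS](Wsq i j).
    by field; apply: dne.
  elim=> [|m IH]; first by [].
  apply: le_trans IH; under eq_bigr do rewrite colS; exact: contr.
have key : S ^+ 2 <= N * C.
  case: k @S => [|m] S.
    have -> : S = 1.
      rewrite /S /mxpow /=; under eq_bigr do rewrite mxE.
      rewrite (bigD1 j) //= eqxx big1 ?addr0 // => i /negbTE ->; by [].
    have [l Wjl] := Wnz j.
    have Wlj : W l j = 1 by rewrite WT; case: (W01 j l) Wjl => ->; rewrite ?eqxx.
    have hC : P l j <= C.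
      rewrite /C (bigD1 l) //= lerDl; apply: sumr_ge0 => i _; exact: P0.
    rewrite expr1n; apply: (@le_trans _ _ (N * P l j)); last first.
      by rewrite ler_wpM2l ?ler0n.
    rewrite PE Wlj mul1r -[1](mulfV (dne l)) ler_wpM2r ?invr_ge0 //.
  apply: le_trans (@cs_bound R n d (fun i => mxpow P m.+1 i j) n0 d1) _.
  rewrite ler_wpM2l ?ler0n //; exact: Dn.
have hsq : (a * S) ^+ 2 <= x.
  apply: le_trans hx; rewrite exprMn expr2 -mulrA ler_wpM2l //.
  apply: (@le_trans _ _ (a * (N * C))); first by rewrite ler_wpM2l.
  by rewrite mulrA mulrC (mulrC a) aN mulr1.
apply: (@le_trans _ _ (Num.sqrt x)); last first.
  by rewrite ler_peMl ?sqrtr_ge0 // ler1n.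
apply: le_trans (ler_norm _) _; rewrite -sqrtr_sqr; exact: ler_wsqrtr.
Qed.
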